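(* Let $m\ge 2$ and $\bm P_m=\bm I_m-\frac1m\bm J_m\in\mathbb{R}^{m\times m}$. Then $\bm P_m$ admits a unique Cholesky factorization $\bm P_m=\bm L\bm L^T$ with $\bm L\in\mathbb{R}^{m\times m}$ lower triangular with nonnegative diagonal entries, and $\bm L$ is given explicitly by \[ L_{ij}=\begin{cases}\sqrt{\dfrac{m-i}{m-i+1}}, & i=j<m,\\[1ex] -\dfrac{1}{\sqrt{(m-j+1)(m-j)}}, & 1\le j<i\le m,\\[1ex] 0, & \text{otherwise}.\end{cases} \]
   Context: $\bm J_m$ denotes the $m\times m$ all-ones matrix and $\bm I_m$ the identity matrix. *)

(* Defs.v *)
From HB Require Import structures.
From mathcomp Require Import all_boot all_order all_algebra.
Set Implicit Arguments. Unset Strict Implicit. Unset Printing Implicit Defensive.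
Import Order.TTheory GRing.Theory Num.Theory.
Local Open Scope ring_scope.

Definition Pm (R : rcfType) (m : nat) : 'M[R]_m :=
  1%:M - (m%:R)^-1 *: const_mx 1.

(* Explicit Cholesky factor, indices 0-based: paper's (i,j) = (i+1, j+1). *)
Definition cholL (R : rcfType) (m : nat) : 'M[R]_m :=
  \matrix_(i < m, j < m)
    if (i == j :> nat) && (i.+1 < m)%N then
      Num.sqrt ((m - i.+1)%:R / (m - i)%:R)
    else if (j < i)%N then
      - (Num.sqrt ((m - j)%:R * (m - j.+1)%:R))^-1
    else 0.

(* Main.v *)
Require Import Defs.
From HB Require Import structures.
From mathcomp Require Import all_boot all_order all_algebra.
From mathcomp Require Import ring lra zify.
Import Order.TTheory GRing.Theory Num.Theory.
Local Open Scope ring_scope.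

Definition ca (R : rcfType) (m k : nat) : R :=
  (Num.sqrt ((m - k)%:R * (m - k.+1)%:R))^-1.

Lemma cL_lt (R : rcfType) m (i k : 'I_m) : (k < i)%N -> cholL R m i k = - ca R m k.
Proof. by move=> hk; rewrite /cholL mxE (gtn_eqF hk) /= hk. Qed.

Lemma cL_gt (R : rcfType) m (i k : 'I_m) : (i < k)%N -> cholL R m i k = 0.
Proof. by move=> hk; rewrite /cholL mxE (ltn_eqF hk) /= ltnNge ltnW. Qed.

Lemma cL_diag (R : rcfType) m (j : 'I_m) : cholL R m j j =
  if (j.+1 < m)%N then Num.sqrt ((m - j.+1)%:R / (m - j)%:R) else 0.
Proof. by rewrite /cholL mxE eqxx /= ltnn; case: ifP. Qed.

Lemma tele (R : rcfType) m j : (j < m)%N ->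
  \sum_(k < j) ca R m k ^+ 2 = (m - j)%:R^-1 - m%:R^-1.
Proof.
elim: j => [|j IH] hj; first by rewrite big_ord0 subn0 subrr.
rewrite big_ord_recr /= IH ?(ltnW hj) // /ca exprVn sqr_sqrtr ?mulr_ge0 //.
have e1 : (m - j = (m - j.+2).+2)%N by lia.
have e2 : (m - j.+1 = (m - j.+2).+1)%N by lia.
rewrite e1 e2; set n := (m - j.+2)%N.
rewrite -[n.+2]addn2 -[n.+1]addn1 !natrD.
have h0 : 0 <= n%:R :> R by [].
have hm : 0 < m%:R :> R by rewrite ltr0n; lia.
field; apply/and3P; split; apply/eqP; lra.
Qed.
Lemma gram_split (R : rcfType) (m : nat) (A : 'M[R]_m) (i j : 'I_m) :
  is_trig_mx A ->
  (A *m A^T) i j = \sum_(k < m | (k < j)%N) A i k * A j k + A i j * A j j.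
Proof.
move/is_trig_mxP=> tA; rewrite mxE (bigD1 j) //= !mxE addrC; congr (_ + _).
rewrite (bigID (fun k : 'I_m => (k < j)%N)) /= [X in _ + X]big1 ?addr0.
  apply: eq_big => [k|k _]; last by rewrite mxE.
  by case: ltnP => hk; rewrite ?andbF // andbT neq_ltn hk.
move=> k /andP[kj]; rewrite -leqNgt => jk.
by rewrite mxE (tA j k) ?mulr0 // ltn_neqAle eq_sym kj jk.
Qed.

Lemma gram_sym (R : rcfType) (m : nat) (A : 'M[R]_m) (i j : 'I_m) :
  (A *m A^T) i j = (A *m A^T) j i.
Proof. by rewrite !mxE; apply: eq_bigr => k _; rewrite !mxE mulrC. Qed.

Lemma chol_uniq (R : rcfType) (m : nat) (A B : 'M[R]_m) :
  is_trig_mx A -> is_trig_mx B ->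
  (forall i, 0 <= A i i) -> (forall i, 0 <= B i i) ->
  (forall j : 'I_m, (j.+1 < m)%N -> B j j != 0) ->
  A *m A^T = B *m B^T -> A = B.
Proof.
move=> tA tB pA pB nzB eAB.
have tA' := tA; have tB' := tB.
move/is_trig_mxP: tA' => tA'; move/is_trig_mxP: tB' => tB'.
suff H : forall n (j : 'I_m), (j < n)%N -> forall i, A i j = B i j.
  by apply/matrixP => i j; apply: (H j.+1).
elim=> [//|n IH] j; rewrite ltnS leq_eqVlt => /orP[/eqP jn|]; last exact: IH.
have S : forall i, \sum_(k < m | (k < j)%N) A i k * A j k =
                   \sum_(k < m | (k < j)%N) B i k * B j k.
  by move=> i; apply: eq_bigr => k kj; rewrite !(IH k) // -jn.
have E : forall i, A i j * A j j = B i j * B j j.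
  move=> i; have := congr1 (fun M : 'M[R]_m => M i j) eAB => /=.
  by rewrite !gram_split // S => /addrI.
have djj : A j j = B j j.
  apply/eqP; rewrite -(@eqrXn2 _ 2) // !expr2; exact/eqP/E.
move=> i; case: (ltngtP i j) => [ij|ji|/val_inj ->] //.
- by rewrite tA' // tB'.
- have nz : B j j != 0 by apply: nzB; exact: leq_ltn_trans ji (ltn_ord i).
  by apply: (mulIf nz); rewrite -{1}djj E.
Qed.

Lemma cL_trig (R : rcfType) m : is_trig_mx (cholL R m).
Proof. by apply/is_trig_mxP => i j; apply: cL_gt. Qed.

Lemma cL_nneg (R : rcfType) m (i : 'I_m) : 0 <= cholL R m i i.
Proof. by rewrite cL_diag; case: ifP => // _; apply: sqrtr_ge0. Qed.

Lemma cL_nz (R : rcfType) m (j : 'I_m) : (j.+1 < m)%N -> cholL R m j j != 0.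
Proof.
move=> hj; rewrite cL_diag hj sqrtr_eq0 -ltNge.
apply: divr_gt0; rewrite ltr0n; lia.
Qed.

Lemma cL_gram (R : rcfType) m : cholL R m *m (cholL R m)^T = Pm R m.
Proof.
apply/matrixP => i j.
idtac "A".
wlog ji : i j / (j <= i)%N.
  move=> W; case: (leqP j i) => [|/ltnW] h; first exact: W.
  by rewrite gram_sym W // /Pm !mxE eq_sym.
idtac "B".
have hm : 0 < m%:R :> R by rewrite ltr0n; case: i {ji} => i /=; lia.
idtac "C".
rewrite gram_split ?cL_trig //.
idtac "D".
have -> : \sum_(k < m | (k < j)%N) cholL R m i k * cholL R m j k =
   \sum_(k < m | (k < j)%N) ca R m k ^+ 2.
  apply: eq_bigr => k kj.
  idtac "D1".
  rewrite (@cL_lt R m i k (leq_trans kj ji)) (@cL_lt R m j k kj).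
  idtac "D3".
  by rewrite mulrNN expr2.
rewrite -(@big_ord_widen _ _ _ j m (fun k => ca R m k ^+ 2)); last exact: ltnW.
idtac "E".
rewrite (@tele R m j (ltn_ord j)).
idtac "F".
have -> : Pm R m i j = (i == j)%:R - m%:R^-1.
  by rewrite /Pm !mxE mulr1.
case: (ltngtP j i) ji => // [ji|/val_inj ->] _.
- have -> : (i == j) = false by apply/negbTE; rewrite -val_eqE /= gtn_eqF.
  rewrite /= (@cL_lt R m i j ji) cL_diag.
  have hj : (j.+1 < m)%N by apply: leq_ltn_trans ji (ltn_ord i).
  rewrite hj /ca.
  have e1 : (m - j = (m - j.+2).+2)%N by lia.
  have e2 : (m - j.+1 = (m - j.+2).+1)%N by lia.
  rewrite e1 e2; set n := (m - j.+2)%N.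
  rewrite !sqrtrM // sqrtrV //.
  set s := Num.sqrt (n.+1)%:R; set t := Num.sqrt (n.+2)%:R.
  have ht : t ^+ 2 = (n.+2)%:R by rewrite sqr_sqrtr.
  have tn : t != 0 by rewrite sqrtr_eq0 -ltNge ltr0n.
  have sn : s != 0 by rewrite sqrtr_eq0 -ltNge ltr0n.
  have -> : (n.+2%:R)^-1 = (t ^+ 2)^-1 :> R by rewrite ht.
  by field; rewrite tn sn (gt_eqF hm).
- rewrite eqxx cL_diag.
  case: ifP => h.
    rewrite -expr2 sqr_sqrtr ?divr_ge0 //.
    have e1 : (m - i = (m - i.+2).+2)%N by lia.
    have e2 : (m - i.+1 = (m - i.+2).+1)%N by lia.
    rewrite e1 e2; set n := (m - i.+2)%N.
    rewrite -[n.+2]addn2 -[n.+1]addn1 !natrD.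
    have h0 : 0 <= n%:R :> R by [].
    rewrite mulr1n; field; apply/andP; split; apply/eqP; lra.
  have e1 : (m - i = 1)%N by move: (ltn_ord i) h; lia.
  by rewrite e1 mulr0 addr0 invr1 mulr1n.
Qed.

Theorem lemma2 (R : rcfType) (m : nat) (hm : (2 <= m)%N) (L : 'M[R]_m) :
  [/\ is_trig_mx L, (forall i : 'I_m, 0 <= L i i) & Pm R m = L *m L^T]
  <-> L = cholL R m.
Proof.
split.
  case=> tL pL eL; apply: chol_uniq => //.
  - exact: cL_trig.
  - exact: cL_nneg.
  - exact: cL_nz.
  - by rewrite -eL cL_gram.
move=> ->; split.
- exact: cL_trig.
- exact: cL_nneg.
- by rewrite cL_gram.
Qed.
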